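(* Let $n\ge2$, $(a,b)\in\Omega_n$ and $L=L^{(n)}_{(a,b)}$. Then (i) $\mathrm{Orb}(L,\omega^a)=\mathrm{Orb}(L,1)$ if and only if $n/a$ is odd; (ii) $\mathrm{Orb}(L,\omega^bj)=\mathrm{Orb}(L,j)$ if and only if $n/b$ is odd. In particular, $L$ (which is the union of $\mathrm{Orb}(L,1),\mathrm{Orb}(L,\omega^a),\mathrm{Orb}(L,j),\mathrm{Orb}(L,\omega^bj)$) can have two, three or four orbits.
   Context: $\mathbb{H}$ is the real quaternion algebra with basis $1,i,j,k$. For $n\ge2$ let $\omega:=\cos(\pi/n)+i\sin(\pi/n)\in\mathbb{H}$ and $\mathcal{D}_n:=\langle\omega,j\rangle$ (dicyclic group of order $4n$). $\Omega_n:=\{(a,b):1\le a\le b\le n,\ a\mid n,\ b\mid n,\ \gcd(a,b)=1\}$. For $x,y$ in a group put $x\circ y:=xy^{-1}x$; $L(X)$ is the closure of a set $X$ under $\circ$; $L^{(n)}_{(a,b)}:=L(\{1,\omega^a,j,\omega^bj\})$. For $b\in L$, the orbit $\mathrm{Orb}(L,b)$ is the closure of $\{b\}$ under all maps $x\mapsto a\circ x=ax^{-1}a$ with $a\in L$. *)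

(* Defs.v *)
From mathcomp Require Import all_boot all_order all_algebra.
Set Implicit Arguments. Unset Strict Implicit. Unset Printing Implicit Defensive.
Import GRing.Theory.
Local Open Scope ring_scope.

(* The dicyclic group D_n = <omega, j> inside the quaternions, in its normal
   form: every element is uniquely omega^k j^e with k in Z/2nZ, e in {0,1}.
   The pair (k, e) encodes omega^k j^e.  The multiplication is the quaternion
   product, computed from  j omega = omega^{-1} j,  j^2 = -1 = omega^n,
   omega^(2n) = 1 (omega = cos(pi/n) + i sin(pi/n)).  For n >= 2, 'Z_(n.*2)
   is exactly Z/2nZ. *)
Definition dic (n : nat) := ('Z_(n.*2) * bool)%type.

(* (omega^k j^e)(omega^m j^f) = omega^(k + (-1)^e m + [e && f] n) j^(e xor f) *)
Definition dmul (n : nat) (x y : dic n) : dic n :=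
  (x.1 + (if x.2 then - y.1 else y.1) + (if x.2 && y.2 then n%:R else 0),
   x.2 (+) y.2).

(* (omega^k)^-1 = omega^-k ; (omega^k j)^-1 = omega^(k+n) j *)
Definition dinv (n : nat) (x : dic n) : dic n :=
  if x.2 then (x.1 + n%:R, true) else (- x.1, false).

Definition d1 (n : nat) : dic n := (0, false).
Definition dom (n : nat) (a : nat) : dic n := (a%:R, false).
Definition dj (n : nat) : dic n := (0, true).
Definition domj (n : nat) (b : nat) : dic n := (b%:R, true).

Definition dcirc (n : nat) (x y : dic n) : dic n := dmul (dmul x (dinv y)) x.

Definition Omega (n a b : nat) : Prop :=
  (1 <= a)%N /\ (a <= b)%N /\ (b <= n)%N /\ (a %| n)%N /\ (b %| n)%N /\ coprime a b.

Inductive Lclos (n : nat) (X : dic n -> Prop) : dic n -> Prop :=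
  | Lclos_base x : X x -> Lclos X x
  | Lclos_step x y : Lclos X x -> Lclos X y -> Lclos X (dcirc x y).

Definition Lab (n a b : nat) : dic n -> Prop :=
  Lclos (fun x => x = d1 n \/ x = dom n a \/ x = dj n \/ x = domj n b).

Inductive Orb (n : nat) (L : dic n -> Prop) (b : dic n) : dic n -> Prop :=
  | Orb_base : Orb L b b
  | Orb_step a x : L a -> Orb L b x -> Orb L b (dcirc a x).

Definition same_set (n : nat) (P Q : dic n -> Prop) : Prop := forall x, P x <-> Q x.

Arguments d1 n : clear implicits.
Arguments dom n a : clear implicits.
Arguments dj n : clear implicits.
Arguments domj n b : clear implicits.
Arguments Lab n a b : clear implicits.

(* Main.v *)
Require Import Defs.
From mathcomp Require Import all_boot all_order all_algebra ring.
Import GRing.Theory.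
Local Open Scope ring_scope.

Lemma dvd_modN d N m : (d %| N)%N -> (d %| m %% N)%N = (d %| m)%N.
Proof. move=> hN; by rewrite {2}(divn_eq m N) dvdn_addr // dvdn_mull. Qed.

Section Z.
Variable p : nat.
Local Notation N := (Zp_trunc p).+2.
Lemma zdvdD d (x y : 'Z_p) : (d %| N)%N -> (d %| x)%N -> (d %| y)%N -> (d %| (x + y)%R)%N.
Proof. move=> hN hx hy. change (d %| (x + y) %% N)%N.
by rewrite dvd_modN // dvdn_add. Qed.
Lemma zdvdN d (x : 'Z_p) : (d %| N)%N -> (d %| x)%N -> (d %| (- x)%R)%N.
Proof. move=> hN hx. change (d %| (N - x) %% N)%N.
by rewrite dvd_modN // dvdn_sub. Qed.
Lemma zdvdn d k : (d %| N)%N -> (d %| (k%:R : 'Z_p))%N = (d %| k)%N.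
Proof. move=> hN. 
have -> : ((k%:R : 'Z_p) : nat) = (k %% N)%N.
  by rewrite -(@val_Zp_nat N) //; congr val; apply/val_inj; rewrite /= modn_mod. 
by rewrite dvd_modN. Qed.
Lemma zdvd2 d (x : 'Z_p) : (2 * d %| (Zp_trunc p).+2)%N -> (d %| x)%N -> (2 * d %| (x + x)%R)%N.
Proof. move=> hN hx. change (2 * d %| (x + x) %% (Zp_trunc p).+2)%N.
by rewrite dvd_modN // addnn -mul2n dvdn_pmul2l. Qed.
End Z.

Section Main.
Variable n : nat.
Hypothesis hn : (2 <= n)%N.
Local Notation N := (Zp_trunc n.*2).+2.

Lemma hN : N = n.*2.
Proof. apply: Zp_cast. by rewrite -addnn; apply: (leq_trans hn); rewrite leq_addr. Qed.

Lemma dvdN d : (d %| n)%N -> (d %| N)%N.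
Proof. by rewrite hN -muln2 => h; apply: dvdn_mulr. Qed.

Lemma dc_same (k m : 'Z_(n.*2)) e : dcirc (k, e) (m, e) = (k - m + k, e).
Proof. by case: e; rewrite /dcirc /dmul /dinv /=; congr pair; ring. Qed.

Lemma dc_diff (k m : 'Z_(n.*2)) e : dcirc (k, ~~ e) (m, e) = (m + n%:R, e).
Proof. by case: e; rewrite /dcirc /dmul /dinv /=; congr pair; ring. Qed.

Lemma Orb_trans (L : dic n -> Prop) b y x : Orb L b y -> Orb L y x -> Orb L b x.
Proof. move=> hy; elim => // c z hc _ ih; exact: Orb_step. Qed.

Lemma Orb_L (X : dic n -> Prop) b x : Lclos X b -> Orb (Lclos X) b x -> Lclos X x.
Proof. move=> hb; elim => // c z hc _ ih; exact: Lclos_step. Qed.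

Lemma gen_mult (L : dic n -> Prop) (e : bool) d :
  (forall x y, L x -> L y -> L (dcirc x y)) ->
  L (0, e) -> L (d%:R, e) -> forall s, L ((d * s)%:R, e).
Proof.
move=> hcl h0 hd.
suff H : forall s, L ((d * s)%:R, e) /\ L ((d * s.+1)%:R, e) by move=> s; case: (H s).
elim=> [|s [ih1 ih2]]; first by rewrite muln0 muln1.
split => //.
have -> : ((d * s.+2)%:R : 'Z_(n.*2)) = (d * s.+1)%:R - (d * s)%:R + (d * s.+1)%:R.
  by rewrite !mulnS !natrD; ring.
by rewrite -dc_same; apply: hcl.
Qed.

Lemma part (L : dic n -> Prop) (e : bool) d :
  (forall x y, L x -> L y -> L (dcirc x y)) ->
  L (0, e) -> L (d%:R, e) -> L (0, ~~ e) ->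
  (0 < d)%N -> (d %| n)%N ->
  (forall c, L c -> c.2 = e -> (d %| c.1)%N) ->
  same_set (Orb L (d%:R, e)) (Orb L (0, e)) <-> odd (n %/ d).
Proof.
move=> hcl h0 hd h0' dpos hdn hinv.
have hn' : n = (n %/ d * d)%N by rewrite divnK.
split.
  move=> hsame; apply: contraT => hev.
  have h2d : (2 * d %| n)%N by rewrite hn' dvdn_pmul2r // dvdn2.
  have h2N := dvdN _ h2d.
  have inv : forall x, Orb L (0, e) x -> x.2 = e /\ (2 * d %| x.1)%N.
    move=> x; elim => [|c y hc _ [hy2 hy1]]; first by split => //=; rewrite dvdn0.
    case: y hy2 hy1 => m f hf hm; simpl in hf, hm; rewrite hf.
    case: c hc => k f' hc.
    have [Ef|Ef] := eqVneq f' e.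
      move: hc; rewrite Ef => hc; rewrite dc_same (_ : k - m + k = (k + k) - m); last by ring.
      split => //.
      apply: zdvdD => //; [apply: zdvd2 => //; exact: (hinv _ hc)|exact: zdvdN].
    have Ef' : f' = ~~ e by move: Ef; case: (f'); case: (e).
    rewrite Ef'.
    rewrite dc_diff; split => //; apply: zdvdD => //; by rewrite zdvdn.
  have [_ /=] := inv _ ((hsame _).1 (Orb_base _ _)).
  rewrite zdvdn ?dvdN // gtnNdvd //.
  by rewrite mulSn mul1n -addn1 leq_add2l.
move=> hodd.
have [t ht] : exists t, (n %/ d = (t.*2).+1)%N.
  by exists (n %/ d)./2; rewrite -{1}(odd_double_half (n %/ d)) hodd add1n.
have hnat : (d * t.+1 + d * t.+1 = n + d)%N.
  rewrite hn' ht -addnn; ring.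
set x := ((d * t.+1)%:R : 'Z_(n.*2)).
have hx : x + x = n%:R + d%:R by rewrite -!natrD hnat.
have hxx : forall y, x - y + x = n%:R + d%:R - y by move=> y; rewrite -hx; ring.
have hc : L (x, e) := @gen_mult L e d hcl h0 hd t.+1.
have E1 : dcirc (x, e) (dcirc (0, ~~ e) (0, e)) = (d%:R, e).
  by rewrite dc_diff dc_same hxx; congr pair; ring.
have E2 : dcirc (x, e) (dcirc (0, ~~ e) (d%:R, e)) = (0, e).
  by rewrite dc_diff dc_same hxx; congr pair; ring.
have O1 : Orb L (0, e) (d%:R, e).
  by rewrite -E1; apply: Orb_step => //; apply: Orb_step => //; apply: Orb_base.
have O2 : Orb L (d%:R, e) (0, e).
  by rewrite -E2; apply: Orb_step => //; apply: Orb_step => //; apply: Orb_base.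
by move=> y; split => h; [apply: Orb_trans O1 h | apply: Orb_trans O2 h].
Qed.

Lemma decomp (L : dic n -> Prop) (e : bool) d :
  (forall x y, L x -> L y -> L (dcirc x y)) ->
  L (0, e) -> L (d%:R, e) -> forall k : 'Z_(n.*2), (d %| k)%N ->
  Orb L (0, e) (k, e) \/ Orb L (d%:R, e) (k, e).
Proof.
move=> hcl h0 hd k /dvdnP [s hs].
have -> : k = (s * d)%:R by rewrite -hs natr_Zp.
rewrite -(odd_double_half s); set u := s./2.
case: (odd s).
  right.
  have -> : ((((true + u.*2) * d)%:R : 'Z_(n.*2)), e) = dcirc ((d * u.+1)%:R, e) (d%:R, e).
    rewrite dc_same -[u.*2]addnn -[u.+1]addn1 /= !natrM !natrD; congr pair; ring.
  apply: Orb_step; [exact: gen_mult|exact: Orb_base].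
left.
have -> : ((((false + u.*2) * d)%:R : 'Z_(n.*2)), e) = dcirc ((d * u)%:R, e) (0, e).
  rewrite dc_same -[u.*2]addnn /= !natrM !natrD; congr pair; ring.
apply: Orb_step; [exact: gen_mult|exact: Orb_base].
Qed.
End Main.

Theorem lemma5p6 (n a b : nat) :
  (2 <= n)%N -> Omega n a b ->
  let L := Lab n a b in
  [/\ same_set (Orb L (dom n a)) (Orb L (d1 n)) <-> odd (n %/ a),
      same_set (Orb L (domj n b)) (Orb L (dj n)) <-> odd (n %/ b)
    & forall x, L x <-> (Orb L (d1 n) x \/ Orb L (dom n a) x \/
                         Orb L (dj n) x \/ Orb L (domj n b) x)].
Proof.
move=> hn [ha1 [hab [hbn [han [hbn' _]]]]] L.
have hcl : forall x y, L x -> L y -> L (dcirc x y) by move=> x y; apply: Lclos_step.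
have L1 : L (d1 n) by apply: Lclos_base; left.
have La : L (dom n a) by apply: Lclos_base; right; left.
have Lj : L (dj n) by apply: Lclos_base; right; right; left.
have Lb : L (domj n b) by apply: Lclos_base; right; right; right.
have hNa := @dvdN n hn a han.
have hNb := @dvdN n hn b hbn'.
have hNn : (n %| (Zp_trunc n.*2).+2)%N by apply: (@dvdN n hn).
have inv : forall x, L x -> (x.2 = false -> (a %| x.1)%N) /\ (x.2 = true -> (b %| x.1)%N).
  move=> x; elim => [y hy | y z _ [iy1 iy2] _ [iz1 iz2]].
    case: hy => [->|[->|[->|->]]] /=; split => // _; by rewrite ?dvdn0 ?zdvdn.
  case: y iy1 iy2 => k e iy1 iy2; case: z iz1 iz2 => m f iz1 iz2.
  case: e iy1 iy2; case: f iz1 iz2 => iz1 iz2 iy1 iy2; simpl in iz1, iz2, iy1, iy2.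
  - rewrite dc_same; split => // _.
    by apply: zdvdD => //; [apply: zdvdD => //; [exact: iy2|apply: zdvdN => //; exact: iz2]|exact: iy2].
  - rewrite (@dc_diff n _ _ false); split => // _.
    by apply: zdvdD => //; [exact: iz1|rewrite zdvdn].
  - rewrite (@dc_diff n _ _ true); split => // _.
    by apply: zdvdD => //; [exact: iz2|rewrite zdvdn].
  - rewrite dc_same; split => // _.
    by apply: zdvdD => //; [apply: zdvdD => //; [exact: iy1|apply: zdvdN => //; exact: iz1]|exact: iy1].
have hb1 : (0 < b)%N by apply: leq_trans hab.
split.
- exact: (@part n hn L false a hcl L1 La Lj ha1 han (fun c hc he => (inv c hc).1 he)).
- exact: (@part n hn L true b hcl Lj Lb L1 hb1 hbn' (fun c hc he => (inv c hc).2 he)).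
move=> x; split.
  case: x => k e hx; have [ia ib] := inv _ hx.
  case: e hx ia ib => hx ia ib.
    have [h|h] := @decomp n L true b hcl Lj Lb _ (ib erefl).
      by right; right; left.
    by right; right; right.
  have [h|h] := @decomp n L false a hcl L1 La _ (ia erefl).
    by left.
  by right; left.
by case => [h|[h|[h|h]]]; apply: (@Orb_L n _ _ x _ h).
Qed.
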